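(* Let $G$ be a connected graph with $n\geq 2$ vertices and $m$ edges. Then for every integer $k\geq 0$, $$R(S^k(G))=2^kR(G)+\frac{4^{k}-2^{k}}{2}R^+(G)+\frac{8^{k}-2\cdot 4^{k}+2^{k}}{4}R^*(G)+\frac{8^k-2^k}{12}m(2m-2n+1)-\frac{4^k-1}{6}(m-n)(m-n+1).$$
   Context: All graphs are finite, undirected, without loops or multiple edges. For a connected graph $H$ and vertices $i,j$, the resistance distance $\Omega_{ij}$ is the effective resistance between $i$ and $j$ in the electrical network obtained from $H$ by replacing each edge by a unit resistor. With $d_i$ the degree of vertex $i$ in $H$ and sums over unordered pairs of distinct vertices of $H$: $R(H)=\sum_{\{i,j\}\subseteq V(H)}\Omega_{ij}$ (Kirchhoff index), $R^+(H)=\sum_{\{i,j\}\subseteq V(H)}(d_i+d_j)\Omega_{ij}$ (additive degree-Kirchhoff index), and $R^*(H)=\sum_{\{i,j\}\subseteq V(H)}d_id_j\Omega_{ij}$ (multiplicative degree-Kirchhoff index). The subdivision $S(H)$ is the graph obtained from $H$ by replacing every edge with a path of length two. Iterated subdivisions: $S^0(G)=G$ and $S^k(G)=S(S^{k-1}(G))$ for $k\geq1$. *)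

(* Defs.v *)
From HB Require Import structures.
From mathcomp Require Import all_boot all_order all_algebra.
Set Implicit Arguments. Unset Strict Implicit. Unset Printing Implicit Defensive.
Import Order.TTheory GRing.Theory Num.Theory.
Local Open Scope ring_scope.

Record graph := Graph { nv : nat; adj : rel 'I_nv }.
Arguments adj : clear implicits.
Arguments Graph : clear implicits.

(* simple graph: symmetric, irreflexive adjacency (no loops, no multi-edges
   since adjacency is a relation) *)
Definition simple (G : graph) : Prop :=
  symmetric (adj G) /\ irreflexive (adj G).

Definition connected (G : graph) : Prop :=
  forall i j : 'I_(nv G), connect (adj G) i j.

(* edge set: unordered pairs {i,j}, represented by (i,j) with i < j *)
Definition edges (G : graph) : {set 'I_(nv G) * 'I_(nv G)} :=
  [set p : 'I_(nv G) * 'I_(nv G) | ((val p.1 < val p.2)%N && adj G p.1 p.2)].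

Definition ne (G : graph) : nat := #|edges G|.

Definition deg (G : graph) (i : 'I_(nv G)) : nat := #|[set j | adj G i j]|.

(* subdivision: vertices 'I_(n + m); the first n are the old vertices,
   vertex n + e is the new vertex placed on edge e (the e-th element of
   enum (edges G)), adjacent exactly to the two endpoints of e. *)
Definition sub_adj (G : graph) : rel 'I_(nv G + #|edges G|) :=
  fun x y =>
    match split x, split y with
    | inl a, inr e => (a == (enum_val e).1) || (a == (enum_val e).2)
    | inr e, inl a => (a == (enum_val e).1) || (a == (enum_val e).2)
    | _, _ => false
    end.

Definition subdiv (G : graph) : graph := Graph _ (@sub_adj G).

Definition subdiv_iter (k : nat) (G : graph) : graph := iter k subdiv G.

Definition lap (R : fieldType) (G : graph) : 'M[R]_(nv G) :=
  \matrix_(i, j) ((i == j)%:R * (deg i)%:R - (adj G i j)%:R).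

(* Resistance distance (effective resistance with unit resistors):
   inject a unit current at i and extract it at j; the vertex potentials v
   satisfy Kirchhoff's laws  v L = e_i - e_j  (L symmetric); we take the
   solution given by pinvmx, and Omega_ij is the potential difference
   v_i - v_j (independent of the chosen solution when G is connected). *)
Definition resistance (R : fieldType) (G : graph) (i j : 'I_(nv G)) : R :=
  let b : 'rV[R]_(nv G) := delta_mx 0 i - delta_mx 0 j in
  let v := b *m pinvmx (lap R G) in
  v 0 i - v 0 j.

Definition kirchhoff (R : fieldType) (G : graph) : R :=
  \sum_(i < nv G) \sum_(j < nv G | (i < j)%N) resistance R i j.

Definition add_deg_kirchhoff (R : fieldType) (G : graph) : R :=
  \sum_(i < nv G) \sum_(j < nv G | (i < j)%N)
     ((deg i + deg j)%:R * resistance R i j).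

Definition mul_deg_kirchhoff (R : fieldType) (G : graph) : R :=
  \sum_(i < nv G) \sum_(j < nv G | (i < j)%N)
     ((deg i * deg j)%:R * resistance R i j).

(* Main.v *)
Require Import Defs.
From HB Require Import structures.
From mathcomp Require Import all_boot all_order all_algebra.
From mathcomp Require Import ring lra.
Set Implicit Arguments. Unset Strict Implicit. Unset Printing Implicit Defensive.
Import Order.TTheory GRing.Theory Num.Theory.
Local Open Scope ring_scope.

Lemma sum_pt (R : nmodType) (I : finType) (x : I) (F : I -> R) :
  (forall i, i != x -> F i = 0) -> \sum_i F i = F x.
Proof. by move=> h; rewrite (bigD1 x) //= big1 ?addr0 // => i; apply: h. Qed.
Arguments sum_pt {R I} x {F} _.

Lemma sum1g (R : pzSemiRingType) (I : finType) (x : I) : \sum_(i : I) (i == x)%:R = 1 :> R.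
Proof. by rewrite (sum_pt x) ?eqxx // => i /negbTE ->. Qed.

Section Basic.
Variable R : realFieldType.
Variable H : graph.
Local Notation n := (nv H).
Local Notation L := (lap R H).

Definition Xm := pinvmx L.
Definition Om (i j : 'I_n) : R := Xm i i + Xm j j - Xm i j - Xm j i.
Definition Qf (b : 'I_n -> R) : R := \sum_i \sum_j b i * b j * Xm i j.

Lemma OmC i j : Om i j = Om j i.
Proof. rewrite /Om; ring. Qed.
Lemma Om0 i : Om i i = 0.
Proof. rewrite /Om; ring. Qed.

Lemma rowdelta (P : 'M[R]_n) (i j k : 'I_n) :
  (((delta_mx 0 i - delta_mx 0 j : 'rV[R]_n)) *m P) 0 k = P i k - P j k.
Proof.
by rewrite mulmxBl -!rowE !mxE.
Qed.

Lemma resistanceE i j : resistance R i j = Om i j.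
Proof.
rewrite /resistance /= !rowdelta /Om -/Xm; ring.
Qed.

Lemma eq_Qf b b' : (forall i, b i = b' i) -> Qf b = Qf b'.
Proof.
by move=> e; rewrite /Qf; apply: eq_bigr => i _; apply: eq_bigr => j _; rewrite !e.
Qed.

Lemma sum_ind (x : 'I_n) (f : 'I_n -> R) : \sum_i (i == x)%:R * f i = f x.
Proof.
rewrite (bigD1 x) //= eqxx mul1r big1 ?addr0 // => i /negbTE ->; by rewrite mul0r.
Qed.

Lemma sum_ind1 (x : 'I_n) : \sum_i (i == x)%:R = 1 :> R.
Proof. by rewrite -[RHS](sum_ind x (fun _ => 1)); apply: eq_bigr => i _; rewrite mulr1. Qed.

Lemma sum_comb (s : seq (R * 'I_n)) (f : 'I_n -> R) :
  \sum_i (\sum_(kp <- s) kp.1 * (i == kp.2)%:R) * f i = \sum_(kp <- s) kp.1 * f kp.2.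
Proof.
under eq_bigr do rewrite mulr_suml.
rewrite exchange_big /=; apply: eq_bigr => kp _.
under eq_bigr do rewrite -mulrA.
by rewrite -mulr_sumr sum_ind.
Qed.

Lemma Qf_comb (s : seq (R * 'I_n)) :
  Qf (fun i => \sum_(kp <- s) kp.1 * (i == kp.2)%:R) =
  \sum_(kp <- s) \sum_(kq <- s) kp.1 * kq.1 * Xm kp.2 kq.2.
Proof.
rewrite /Qf /=.
under eq_bigr do under eq_bigr do rewrite -mulrA.
under eq_bigr do rewrite -mulr_sumr.
rewrite (sum_comb s (fun i => \sum_j _ * Xm i j)); apply: eq_bigr => kp _.
under eq_bigr do rewrite mulrC.
rewrite sum_comb mulr_sumr; apply: eq_bigr => kq _; ring.
Qed.

Lemma lapE y x : L y x = (y == x)%:R * (deg y)%:R - (adj H y x)%:R.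
Proof. by rewrite mxE. Qed.

Lemma lapC (symH : symmetric (adj H)) x y : L x y = L y x.
Proof. rewrite !lapE eq_sym symH; case: eqP => [->|] //; by rewrite !mul0r. Qed.

Definition Solv := forall b : 'I_n -> R, \sum_i b i = 0 ->
  exists w : 'I_n -> R, forall x, b x = \sum_y w y * L y x.

Lemma Qsol (symH : symmetric (adj H)) (w b : 'I_n -> R) :
  (forall x, b x = \sum_y w y * L y x) -> Qf b = \sum_x w x * b x.
Proof.
move=> hb.
pose bm : 'rV[R]_n := \row_x b x.
pose wm : 'rV[R]_n := \row_x w x.
have ebm : bm = wm *m L by apply/rowP => x; rewrite !mxE hb; apply: eq_bigr => y _; rewrite !mxE.
pose y := bm *m Xm.
have hy : y *m L = bm by rewrite /y /Xm mulmxKpV // ebm submxMl.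
have e1 : Qf b = \sum_j b j * y 0 j.
  rewrite /Qf exchange_big; apply: eq_bigr => j _; rewrite !mxE mulr_sumr.
  by apply: eq_bigr => i _; rewrite !mxE; ring.
rewrite e1.
have e2 : forall j, b j = \sum_x w x * L x j by move=> j; rewrite hb.
under eq_bigr do rewrite e2 mulr_suml.
rewrite exchange_big; apply: eq_bigr => x _.
have -> : b x = bm 0 x by rewrite mxE.
rewrite -hy mxE mulr_sumr; apply: eq_bigr => j _; rewrite (lapC symH); ring.
Qed.


Lemma Om_Qf (p q : 'I_n) : Om p q = Qf (fun i => (i == p)%:R - (i == q)%:R).
Proof.
rewrite (eq_Qf (b' := fun i => \sum_(kp <- [:: (1, p); (-1, q)]) kp.1 * (i == kp.2)%:R)).
  by rewrite Qf_comb !big_cons !big_nil /= /Om; ring.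
by move=> i; rewrite !big_cons big_nil /=; ring.
Qed.

Lemma sum_delta (p q : 'I_n) : \sum_i ((i == p)%:R - (i == q)%:R) = 0 :> R.
Proof. by rewrite sumrB !sum1g subrr. Qed.

Definition dg (x : 'I_n) : R := (deg x)%:R.
Definition AA := \sum_x \sum_y Om x y.
Definition BB := \sum_x \sum_y dg x * Om x y.
Definition CC := \sum_x \sum_y dg x * dg y * Om x y.
Definition FF := \sum_x \sum_y (adj H x y)%:R * Om x y.
Definition Dd (u : 'I_n) := \sum_y dg y * Om u y.

Lemma sumDd : \sum_x Dd x = BB.
Proof.
rewrite /Dd /BB exchange_big; apply: eq_bigr => y _; apply: eq_bigr => x _; by rewrite OmC.
Qed.

Lemma sumdDd : \sum_x dg x * Dd x = CC.
Proof. rewrite /Dd /CC; apply: eq_bigr => x _; rewrite mulr_sumr; apply: eq_bigr => y _; ring. Qed.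

End Basic.

Section Edges.
Variable R : realFieldType.
Variable H : graph.
Hypothesis symH : symmetric (adj H).
Hypothesis irrH : irreflexive (adj H).
Local Notation n := (nv H).
Local Notation m := #|edges H|.

Definition ea (e : 'I_#|edges H|) := (enum_val e).1.
Definition eb (e : 'I_#|edges H|) := (enum_val e).2.

Lemma edge_prop e : ((val (ea e) < val (eb e))%N && adj H (ea e) (eb e)).
Proof. by have := enum_valP e; rewrite in_set. Qed.

Lemma ea_neq e : (ea e == eb e) = false.
Proof.
apply/negbTE; case/andP: (edge_prop e) => h _; apply/eqP => e1.
by rewrite e1 ltnn in h.
Qed.

Lemma sum_edges_set (G : 'I_n * 'I_n -> R) :
  \sum_(p in edges H) G p =
  \sum_x \sum_y ((val x < val y)%N && adj H x y)%:R * G (x, y).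
Proof.
rewrite pair_big /= big_mkcond; apply: eq_bigr => [[x y]] _; rewrite in_set /=.
by case: (_ && _); rewrite ?mul1r ?mul0r.
Qed.

Lemma edge_sum (h : 'I_n -> 'I_n -> R) :
  \sum_(e < m) (h (ea e) (eb e) + h (eb e) (ea e)) =
  \sum_x \sum_y (adj H x y)%:R * h x y.
Proof.
rewrite /ea /eb.
rewrite -(big_enum_val (fun p : 'I_n * 'I_n => h p.1 p.2 + h p.2 p.1)) /=.
rewrite big_split /= !sum_edges_set /=.
rewrite [X in _ + X = _]exchange_big /= -big_split; apply: eq_bigr => x _.
rewrite -big_split; apply: eq_bigr => y _ /=.
rewrite (symH y x).
case: (ltngtP (val x) (val y)) => hxy /=; rewrite ?mul0r ?addr0 ?add0r ?mul1r //.
have -> : x = y by apply: val_inj.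
by rewrite irrH !mul0r.
Qed.

Lemma deg_sum (x : 'I_n) : (deg x)%:R = \sum_y (adj H x y)%:R :> R.
Proof.
rewrite /deg -sum1_card natr_sum big_mkcond /=; apply: eq_bigr => y _.
by rewrite in_set; case: (adj H x y).
Qed.

Lemma handshake : \sum_(x : 'I_n) (deg x)%:R = 2 * (m%:R) :> R.
Proof.
transitivity (\sum_x \sum_y (adj H x y)%:R * (1:R)).
  by apply: eq_bigr => x _; rewrite deg_sum; apply: eq_bigr => y _; rewrite mulr1.
rewrite -(edge_sum (fun _ _ => 1)) sumr_const card_ord -mulr_natr; ring.
Qed.

End Edges.

Section Sub.
Variable R : realFieldType.
Variable H : graph.
Hypothesis symH : symmetric (adj H).
Hypothesis irrH : irreflexive (adj H).
Local Notation n := (nv H).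
Local Notation m := #|edges H|.
Local Notation S := (subdiv H).

Lemma splitL (x : 'I_n) : split (lshift m x) = inl x.
Proof. exact: (unsplitK (inl x)). Qed.
Lemma splitR (e : 'I_m) : split (rshift n e) = inr e.
Proof. exact: (unsplitK (inr e)). Qed.

Lemma adjLL x y : adj S (lshift m x) (lshift m y) = false.
Proof. by rewrite /= /sub_adj !splitL. Qed.
Lemma adjRR e f : adj S (rshift n e) (rshift n f) = false.
Proof. by rewrite /= /sub_adj !splitR. Qed.
Lemma adjLR x e : adj S (lshift m x) (rshift n e) = (x == ea e) || (x == eb e).
Proof. by rewrite /= /sub_adj splitL splitR. Qed.
Lemma adjRL e x : adj S (rshift n e) (lshift m x) = (x == ea e) || (x == eb e).
Proof. by rewrite /= /sub_adj splitL splitR. Qed.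

Lemma ordS (P : 'I_(nv S) -> Prop) :
  (forall x, P (lshift m x)) -> (forall e, P (rshift n e)) -> forall p, P p.
Proof.
move=> hl hr p; rewrite -(splitK p); case: (split p) => [x|e] /=; [exact: hl|exact: hr].
Qed.

Lemma symS : symmetric (adj S).
Proof.
move=> p q; rewrite /= /sub_adj; case: (split p) => [x|e]; case: (split q) => [y|f] //.
Qed.

Lemma irrS : irreflexive (adj S).
Proof. by move=> p; rewrite /= /sub_adj; case: (split p). Qed.

Lemma sumS (F : 'I_(nv S) -> R) :
  \sum_p F p = \sum_x F (lshift m x) + \sum_e F (rshift n e).
Proof. exact: (big_split_ord _ predT F). Qed.

Lemma ind_or (x a b : 'I_n) : a != b -> ((x == a) || (x == b))%:R = (x == a)%:R + (x == b)%:R :> R.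
Proof.
move=> hab; case: (eqVneq x a) => [->|hxa]; rewrite ?eqxx /=.
  by rewrite (negbTE hab) addr0.
by rewrite add0r.
Qed.

Lemma degSL x : (deg (lshift m x : 'I_(nv S)))%:R = (deg x)%:R :> R.
Proof.
rewrite (@deg_sum R S) sumS.

under eq_bigr do rewrite adjLL.
rewrite big1 ?add0r //.
under eq_bigr do rewrite adjLR ind_or ?ea_neq //.
rewrite (@edge_sum R H symH irrH (fun u v => (x == u)%:R)) deg_sum.
under eq_bigr do (under eq_bigr do rewrite mulrC eq_sym; rewrite -mulr_sumr).
by rewrite sum_ind.
Qed.

Lemma degSR e : (deg (rshift n e : 'I_(nv S)))%:R = 2 :> R.
Proof.
rewrite (@deg_sum R S) sumS.
under [X in _ + X]eq_bigr do rewrite adjRR.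
rewrite [X in _ + X]big1 ?addr0 //.
under eq_bigr do rewrite adjRL ind_or ?ea_neq //.
by rewrite big_split /= !sum_ind1.
Qed.



Lemma neS : (#|edges S|)%:R = 2 * m%:R :> R.
Proof.
have h1 := @handshake R S symS irrS.
rewrite sumS in h1.
have e1 : \sum_(x : 'I_n) (@deg S (lshift m x))%:R = \sum_x (@deg H x)%:R :> R.
  by apply: eq_bigr => x _; rewrite degSL.
have e2 : \sum_(e : 'I_m) (@deg S (rshift n e))%:R = \sum_(e < m) 2 :> R.
  by apply: eq_bigr => e _; rewrite degSR.
rewrite e1 e2 in h1.
rewrite (@handshake R H symH irrH) sumr_const card_ord -mulr_natr in h1.
lra.
Qed.

Local Notation LS := (lap R S).
Local Notation LH := (lap R H).

Lemma lapSLL y x : LS (lshift m y) (lshift m x) = (y == x)%:R * (deg x)%:R.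
Proof.
rewrite lapE adjLL subr0 eq_lshift; case: eqVneq => [->|_]; by rewrite ?degSL ?mul0r.
Qed.
Lemma lapSRL e x : LS (rshift n e) (lshift m x) = - ((x == ea e)%:R + (x == eb e)%:R).
Proof. by rewrite lapE adjRL eq_rlshift mul0r sub0r ind_or ?ea_neq. Qed.
Lemma lapSLR x e : LS (lshift m x) (rshift n e) = - ((x == ea e)%:R + (x == eb e)%:R).
Proof. by rewrite lapE adjLR eq_lrshift mul0r sub0r ind_or ?ea_neq. Qed.
Lemma lapSRR f e : LS (rshift n f) (rshift n e) = (f == e)%:R * 2.
Proof.
rewrite lapE adjRR subr0 eq_rshift; case: eqVneq => [->|_]; by rewrite ?degSR ?mul0r.
Qed.

Definition ind2 (x : 'I_n) (e : 'I_m) : R := (x == ea e)%:R + (x == eb e)%:R.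

Definition Pb (b : 'I_(nv S) -> R) (x : 'I_n) : R :=
  b (lshift m x) + 2^-1 * \sum_e ind2 x e * b (rshift n e).

Lemma sum_ind2 (e : 'I_m) : \sum_x ind2 x e = 2.
Proof. by rewrite /ind2 big_split /= !sum_ind1. Qed.

Lemma sum_ind2f (e : 'I_m) (f : 'I_n -> R) : \sum_x ind2 x e * f x = f (ea e) + f (eb e).
Proof.
rewrite /ind2; under eq_bigr do rewrite mulrDl.
by rewrite big_split /= !sum_ind.
Qed.

Lemma sumPb b : \sum_x Pb b x = \sum_p b p.
Proof.
rewrite sumS /Pb big_split /=; congr (_ + _).
rewrite -mulr_sumr exchange_big /=.
under eq_bigr do rewrite -mulr_suml sum_ind2.
rewrite -mulr_sumr mulrA mulVf ?mul1r //.
by rewrite pnatr_eq0.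
Qed.

Definition wS (v : 'I_n -> R) (b : 'I_(nv S) -> R) (p : 'I_(nv S)) : R :=
  match split p with
  | inl x => 2 * v x
  | inr e => v (ea e) + v (eb e) + b (rshift n e) / 2
  end.

Lemma wSL v b x : wS v b (lshift m x) = 2 * v x.
Proof. by rewrite /wS splitL. Qed.
Lemma wSR v b e : wS v b (rshift n e) = v (ea e) + v (eb e) + b (rshift n e) / 2.
Proof. by rewrite /wS splitR. Qed.

Lemma sum_vind (v : 'I_n -> R) x :
  \sum_e (v (ea e) + v (eb e)) * ind2 x e = v x * (deg x)%:R + \sum_y (adj H x y)%:R * v y.
Proof.
transitivity (\sum_e ((fun u w => (x == u)%:R * (v u + v w)) (ea e) (eb e) +
                      (fun u w => (x == u)%:R * (v u + v w)) (eb e) (ea e))).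
  by apply: eq_bigr => e _; rewrite /ind2 /=; ring.
rewrite (@edge_sum R H symH irrH (fun u w => (x == u)%:R * (v u + v w))) (sum_pt x) => [|u hu]; last first.
  by apply: big1 => w _; rewrite eq_sym (negbTE hu) mul0r mulr0.
rewrite eqxx deg_sum mulr_sumr -big_split /=; apply: eq_bigr => w _; ring.
Qed.

Lemma lapH_sum (v : 'I_n -> R) x :
  \sum_y v y * LH y x = v x * (deg x)%:R - \sum_y (adj H x y)%:R * v y.
Proof.
under eq_bigr do rewrite lapE mulrBr.
rewrite sumrB (sum_pt x) => [|y hy]; last by rewrite (negbTE hy) mul0r mulr0.
rewrite eqxx mul1r; congr (_ - _); apply: eq_bigr => y _; rewrite symH; ring.
Qed.

Lemma wS_sol (v : 'I_n -> R) (b : 'I_(nv S) -> R) :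
  (forall x, Pb b x = \sum_y v y * LH y x) ->
  forall p, b p = \sum_q wS v b q * LS q p.
Proof.
move=> hv; apply: ordS => [x|e]; rewrite sumS.
- rewrite (sum_pt x) => [|y hy]; last by rewrite lapSLL (negbTE hy) mul0r mulr0.
  rewrite wSL lapSLL eqxx mul1r.
  under eq_bigr do rewrite wSR lapSRL.
  have := hv x; rewrite lapH_sum /Pb => hx.
  have e1 : \sum_e ((v (ea e) + v (eb e) + b (rshift n e) / 2) * - ind2 x e) =
    - (\sum_e (v (ea e) + v (eb e)) * ind2 x e) - 2^-1 * \sum_e ind2 x e * b (rshift n e).
    rewrite mulr_sumr -sumrN -sumrB; apply: eq_bigr => e _; ring.
  rewrite -/(ind2 _ _) in e1 *.
  rewrite e1 sum_vind.
  set T := \sum_e _ in hx *.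
  set U := \sum_y _ in hx *.
  lra.
- rewrite (sum_pt e) => [|f hf]; last by rewrite lapSRR (negbTE hf) mul0r mulr0.
  rewrite wSR lapSRR eqxx mul1r.
  have -> : \sum_i wS v b (lshift m i) * LS (lshift m i) (rshift n e) = -2 * (v (ea e) + v (eb e)).
    under eq_bigr do rewrite wSL lapSLR.
    rewrite -(sum_ind2f e v) mulr_sumr; apply: eq_bigr => i _; rewrite /ind2; ring.
  by field.
Qed.

Lemma Solv_sub : Solv R H -> Solv R S.
Proof.
move=> hs b hb.
have [v hv] := hs (Pb b) (etrans (sumPb b) hb).
by exists (wS v b); apply: wS_sol.
Qed.


Lemma Qf_sub (hs : Solv R H) (b : 'I_(nv S) -> R) : \sum_p b p = 0 ->
  Qf b = 2 * Qf (Pb b) + 2^-1 * \sum_e b (rshift n e) ^+ 2.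
Proof.
move=> hb.
have [v hv] := hs (Pb b) (etrans (sumPb b) hb).
rewrite (Qsol symS (wS_sol hv)) (Qsol symH hv) sumS.
under eq_bigr do rewrite wSL.
under [X in _ + X = _]eq_bigr do rewrite wSR.
rewrite /Pb.
under [X in _ = 2 * X + _]eq_bigr do rewrite mulrDr.
rewrite big_split /=.
have -> : \sum_i v i * (2^-1 * \sum_e ind2 i e * b (rshift n e)) =
          2^-1 * \sum_e (v (ea e) + v (eb e)) * b (rshift n e).
  under eq_bigr do rewrite mulrCA.
  rewrite -mulr_sumr; congr (_ * _).
  under eq_bigr do rewrite mulr_sumr.
  rewrite exchange_big; apply: eq_bigr => e _ /=.
  rewrite -sum_ind2f mulr_suml; apply: eq_bigr => i _; ring.
rewrite [X in X + _ = _](_ : _ = 2 * \sum_i v i * b (lshift m i)); last first.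
  by rewrite mulr_sumr; apply: eq_bigr => i _; ring.
rewrite [X in _ + X = _](_ : _ = \sum_e (v (ea e) + v (eb e)) * b (rshift n e)
   + 2^-1 * \sum_e b (rshift n e) ^+ 2); last first.
  by rewrite mulr_sumr -big_split /=; apply: eq_bigr => e _; ring.
by field.
Qed.

Local Notation OmH := (@Om R H).

Lemma OmLL (hs : Solv R H) x y : @Om R S (lshift m x) (lshift m y) = 2 * OmH x y.
Proof.
rewrite (@Om_Qf R S) Qf_sub ?sum_delta //.
rewrite (eq_Qf (b' := fun i => \sum_(kp <- [:: (1, x); (-1, y)]) kp.1 * (i == kp.2)%:R)).
  rewrite Qf_comb !big_cons !big_nil /= big1 => [|e _]; last by rewrite !eq_rlshift subrr expr0n.
  by rewrite /Om; ring.
move=> z; rewrite /Pb big1 => [|e _]; last by rewrite !eq_rlshift subrr mulr0.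
by rewrite !eq_lshift !big_cons big_nil /=; ring.
Qed.

Lemma OmLR (hs : Solv R H) x e : @Om R S (lshift m x) (rshift n e) =
  OmH x (ea e) + OmH x (eb e) - OmH (ea e) (eb e) / 2 + 2^-1.
Proof.
rewrite (@Om_Qf R S) Qf_sub ?sum_delta //.
rewrite (eq_Qf (b' := fun i => \sum_(kp <- [:: (1, x); (-(2^-1), ea e); (-(2^-1), eb e)])
   kp.1 * (i == kp.2)%:R)).
  rewrite Qf_comb !big_cons !big_nil /= (sum_pt e) => [|f hf]; last first.
    by rewrite eq_rlshift eq_rshift (negbTE hf) subrr expr0n.
  rewrite eq_rlshift eq_rshift eqxx /= /Om; by field.
move=> z; rewrite /Pb (sum_pt e) => [|f hf]; last by rewrite eq_rlshift eq_rshift (negbTE hf) subrr mulr0.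
rewrite eq_rlshift eq_rshift eqxx eq_lrshift eq_lshift !big_cons big_nil /= /ind2; ring.
Qed.

Lemma OmRR (hs : Solv R H) e f : e != f -> @Om R S (rshift n e) (rshift n f) =
  (OmH (ea e) (ea f) + OmH (ea e) (eb f) + OmH (eb e) (ea f) + OmH (eb e) (eb f)) / 2
  - (OmH (ea e) (eb e) + OmH (ea f) (eb f)) / 2 + 1.
Proof.
move=> hef.
rewrite (@Om_Qf R S) Qf_sub ?sum_delta //.
rewrite (eq_Qf (b' := fun i => \sum_(kp <- [:: (2^-1, ea e); (2^-1, eb e); (-(2^-1), ea f); (-(2^-1), eb f)])
   kp.1 * (i == kp.2)%:R)).
  rewrite Qf_comb !big_cons !big_nil /=.
  have -> : \sum_g ((rshift n g == rshift n e :> 'I_(nv S))%:R - (rshift n g == rshift n f :> 'I_(nv S))%:R) ^+ 2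
     = \sum_g ((g == e)%:R + (g == f)%:R) :> R.
    apply: eq_bigr => g _; rewrite !eq_rshift.
    case: (eqVneq g e) => [->|hge]; first by rewrite (negbTE hef) /=; ring.
    by case: (eqVneq g f) => _ /=; ring.
  rewrite big_split /= !sum1g /Om; by field.
move=> z; rewrite /Pb.
have -> : \sum_g ind2 z g * ((rshift n g == rshift n e :> 'I_(nv S))%:R - (rshift n g == rshift n f :> 'I_(nv S))%:R)
   = ind2 z e - ind2 z f.
  under eq_bigr do rewrite !eq_rshift mulrBr.
  rewrite sumrB (sum_pt e) => [|g hg]; last by rewrite (negbTE hg) mulr0.
  rewrite (sum_pt f) => [|g hg]; last by rewrite (negbTE hg) mulr0.
  by rewrite !eqxx !mulr1.
rewrite !eq_lrshift !big_cons big_nil /= /ind2; ring.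
Qed.

Local Notation DdH := (@Dd R H).
Local Notation FFH := (@FF R H).
Local Notation CCH := (@CC R H).
Local Notation dgH := (@dg R H).

Lemma sumE_Omx x : \sum_e (OmH x (ea e) + OmH x (eb e)) = DdH x.
Proof.
rewrite (@edge_sum R H symH irrH (fun u v => OmH x u)) /Dd; apply: eq_bigr => u _.
by rewrite -mulr_suml /dg deg_sum.
Qed.

Lemma sumE_Om : \sum_e OmH (ea e) (eb e) = FFH / 2.
Proof.
have h := @edge_sum R H symH irrH OmH.
have h2 : \sum_e (OmH (ea e) (eb e) + OmH (eb e) (ea e)) = 2 * \sum_e OmH (ea e) (eb e).
  by rewrite mulr_sumr; apply: eq_bigr => e _; rewrite (@OmC R H (eb e)); ring.
rewrite h2 in h; rewrite /FF -h; by field.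
Qed.

Lemma sumE_f (g : 'I_n -> R) : \sum_e (g (ea e) + g (eb e)) = \sum_x dgH x * g x.
Proof.
rewrite (@edge_sum R H symH irrH (fun u v => g u)); apply: eq_bigr => u _.
by rewrite -mulr_suml /dg deg_sum.
Qed.

Lemma ON_row (hs : Solv R H) x :
  \sum_e @Om R S (lshift m x) (rshift n e) = DdH x - FFH / 4 + m%:R / 2.
Proof.
under eq_bigr do rewrite (OmLR hs).
rewrite big_split /= sumrB -mulr_suml sumr_const card_ord sumE_Omx sumE_Om -mulr_natr.
by field.
Qed.

Lemma ON_block (hs : Solv R H) (g : 'I_n -> R) :
  \sum_x \sum_e g x * @Om R S (lshift m x) (rshift n e) =
  \sum_x g x * DdH x - (\sum_x g x) * (FFH / 4) + (\sum_x g x) * (m%:R / 2).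
Proof.
under eq_bigr do rewrite -mulr_sumr (ON_row hs) mulrDr mulrBr.
by rewrite big_split /= sumrB -!mulr_suml.
Qed.

Definition Tee (e f : 'I_m) : R :=
  (OmH (ea e) (ea f) + OmH (ea e) (eb f) + OmH (eb e) (ea f) + OmH (eb e) (eb f)) / 2
  - (OmH (ea e) (eb e) + OmH (ea f) (eb f)) / 2 + 1.

Lemma OmRR' (hs : Solv R H) e f : @Om R S (rshift n e) (rshift n f) = Tee e f - (e == f)%:R.
Proof.
case: (eqVneq e f) => [->|hef].
  rewrite Om0 /Tee !Om0 (@OmC R H (eb f)) /=; by field.
by rewrite (OmRR hs hef) /= subr0.
Qed.

Lemma Tee_row e : \sum_f Tee e f =
  (DdH (ea e) + DdH (eb e)) / 2 - (m%:R * OmH (ea e) (eb e) + FFH / 2) / 2 + m%:R.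
Proof.
rewrite /Tee.
have -> : \sum_f ((OmH (ea e) (ea f) + OmH (ea e) (eb f) + OmH (eb e) (ea f) + OmH (eb e) (eb f)) / 2
  - (OmH (ea e) (eb e) + OmH (ea f) (eb f)) / 2 + 1) =
  \sum_f (2^-1 * (OmH (ea e) (ea f) + OmH (ea e) (eb f)) + 2^-1 * (OmH (eb e) (ea f) + OmH (eb e) (eb f))
   - 2^-1 * OmH (ea f) (eb f) + (1 - 2^-1 * OmH (ea e) (eb e))).
  by apply: eq_bigr => f _; ring.
rewrite !big_split /= !sumrN -!mulr_sumr !sumE_Omx sumE_Om !sumr_const card_ord.
rewrite -(mulr_natr (OmH (ea e) (eb e))).
by field.
Qed.

Lemma NN_block (hs : Solv R H) :
  \sum_e \sum_f @Om R S (rshift n e) (rshift n f) =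
  CCH / 2 - m%:R * FFH / 2 + m%:R ^+ 2 - m%:R.
Proof.
under eq_bigr do (under eq_bigr do rewrite (OmRR' hs); rewrite sumrB Tee_row).
have h1 : \sum_(e : 'I_m) (\sum_(f : 'I_m) (e == f)%:R) = m%:R :> R.
  transitivity (\sum_(e < m) (1:R)); last by rewrite sumr_const card_ord.
  apply: eq_bigr => e _; rewrite (eq_bigr (fun f => (f == e)%:R)) ?sum1g // => f _; by rewrite eq_sym.
have -> : \sum_e ((DdH (ea e) + DdH (eb e)) / 2 - (m%:R * OmH (ea e) (eb e) + FFH / 2) / 2 + m%:R
      - \sum_(f : 'I_m) (e == f)%:R) =
   2^-1 * \sum_e (DdH (ea e) + DdH (eb e)) - (2^-1 * m%:R) * \sum_e OmH (ea e) (eb e)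
   + \sum_(e : 'I_m) (m%:R - FFH / 4) - \sum_(e : 'I_m) (\sum_(f : 'I_m) (e == f)%:R).
  rewrite !mulr_sumr -!sumrB -!big_split -sumrB; apply: eq_bigr => e _ /=; by field.
rewrite h1 sumE_f sumdDd sumE_Om sumr_const card_ord -mulr_natr.
by field.
Qed.

Local Notation OmS := (@Om R S).

Lemma sum4 (F : 'I_(nv S) -> 'I_(nv S) -> R) :
  \sum_p \sum_q F p q =
  \sum_x \sum_y F (lshift m x) (lshift m y) + \sum_x \sum_e F (lshift m x) (rshift n e)
  + (\sum_e \sum_y F (rshift n e) (lshift m y) + \sum_e \sum_f F (rshift n e) (rshift n f)).
Proof.
under eq_bigr do rewrite sumS.
rewrite sumS !big_split /=; ring.
Qed.

Definition ONg (g : 'I_n -> R) :=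
  \sum_x g x * DdH x - (\sum_x g x) * (FFH / 4) + (\sum_x g x) * (m%:R / 2).

Lemma blocks (hs : Solv R H) (al be : 'I_(nv S) -> R) (g h : 'I_n -> R) (c c' : R) :
  (forall x, al (lshift m x) = g x) -> (forall e, al (rshift n e) = c) ->
  (forall x, be (lshift m x) = h x) -> (forall e, be (rshift n e) = c') ->
  \sum_p \sum_q al p * be q * OmS p q =
  2 * (\sum_x \sum_y g x * h y * OmH x y) + c' * ONg g + c * ONg h
  + c * c' * (CCH / 2 - m%:R * FFH / 2 + m%:R ^+ 2 - m%:R).
Proof.
move=> aL aR bL bR; rewrite sum4.
have -> : \sum_x \sum_y al (lshift m x) * be (lshift m y) * OmS (lshift m x) (lshift m y)
   = 2 * (\sum_x \sum_y g x * h y * OmH x y).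
  rewrite mulr_sumr; apply: eq_bigr => x _; rewrite mulr_sumr; apply: eq_bigr => y _.
  by rewrite aL bL (OmLL hs); ring.
have -> : \sum_x \sum_e al (lshift m x) * be (rshift n e) * OmS (lshift m x) (rshift n e)
   = c' * ONg g.
  rewrite /ONg -(ON_block hs) mulr_sumr; apply: eq_bigr => x _; rewrite mulr_sumr; apply: eq_bigr => e _.
  by rewrite aL bR; ring.
have -> : \sum_e \sum_y al (rshift n e) * be (lshift m y) * OmS (rshift n e) (lshift m y)
   = c * ONg h.
  rewrite /ONg -(ON_block hs) exchange_big mulr_sumr; apply: eq_bigr => x _; rewrite mulr_sumr.
  apply: eq_bigr => e _; by rewrite aR bL OmC; ring.
have -> : \sum_e \sum_f al (rshift n e) * be (rshift n f) * OmS (rshift n e) (rshift n f)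
   = c * c' * (\sum_e \sum_f OmS (rshift n e) (rshift n f)).
  rewrite mulr_sumr; apply: eq_bigr => e _; rewrite mulr_sumr; apply: eq_bigr => f _.
  by rewrite aR bR.
by rewrite (NN_block hs) addrA.
Qed.

Lemma FF_sub (hs : Solv R H) : @FF R S = FFH + 2 * m%:R.
Proof.
rewrite {1}/FF sum4.
rewrite big1 => [|x _]; last by apply: big1 => y _; rewrite adjLL mul0r.
rewrite [X in _ + (_ + X)]big1 => [|e _]; last by apply: big1 => f _; rewrite adjRR mul0r.
have e1 : \sum_x \sum_e (adj S (lshift m x) (rshift n e))%:R * OmS (lshift m x) (rshift n e)
   = FFH / 2 + m%:R.
  rewrite exchange_big.
  under eq_bigr do under eq_bigr do rewrite adjLR ind_or ?ea_neq // -/(ind2 _ _).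
  under eq_bigr do rewrite sum_ind2f !(OmLR hs) !Om0 (@OmC R H (eb _) (ea _)).
  have -> : (m%:R : R) = \sum_(e < m) 1 by rewrite sumr_const card_ord.
  rewrite -sumE_Om -big_split /=; apply: eq_bigr => e _; by field.
have e2 : \sum_e \sum_y (adj S (rshift n e) (lshift m y))%:R * OmS (rshift n e) (lshift m y)
   = FFH / 2 + m%:R.
  rewrite -e1 exchange_big; apply: eq_bigr => x _; apply: eq_bigr => e _.
  by rewrite adjRL adjLR OmC.
rewrite e1 e2; by field.
Qed.

End Sub.

Section Conn.
Variable R : realFieldType.
Variable G : graph.
Hypothesis symG : symmetric (adj G).
Hypothesis irrG : irreflexive (adj G).
Hypothesis conG : connected G.
Local Notation n := (nv G).
Local Notation L := (lap R G).

Lemma kernel_const (u : 'I_n -> R) :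
  (forall j, \sum_i u i * L i j = 0) -> forall i i', u i = u i'.
Proof.
move=> hu.
have hq : \sum_j \sum_i (adj G j i)%:R * (u j - u i) ^+ 2 = 0.
  have e0 : \sum_j u j * (u j * (deg j)%:R - \sum_y (adj G j y)%:R * u y) = 0.
    by rewrite big1 // => j _; rewrite -(@lapH_sum R G symG) hu mulr0.
  transitivity (2 * \sum_j u j * (u j * (deg j)%:R - \sum_y (adj G j y)%:R * u y)); last by rewrite e0 mulr0.
  have ea : \sum_j \sum_i (adj G j i)%:R * u i ^+ 2 = \sum_j u j ^+ 2 * (deg j)%:R.
    rewrite exchange_big; apply: eq_bigr => j _; rewrite deg_sum mulr_sumr.
    by apply: eq_bigr => i _; rewrite symG mulrC.
  have eb : \sum_j \sum_i (adj G j i)%:R * u j ^+ 2 = \sum_j u j ^+ 2 * (deg j)%:R.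
    apply: eq_bigr => j _; rewrite deg_sum mulr_sumr.
    by apply: eq_bigr => i _; rewrite mulrC.
  have ec : \sum_j \sum_i (adj G j i)%:R * (u j - u i) ^+ 2 =
     \sum_j \sum_i (adj G j i)%:R * u j ^+ 2 + \sum_j \sum_i (adj G j i)%:R * u i ^+ 2
     - 2 * \sum_j u j * \sum_y (adj G j y)%:R * u y.
    rewrite -big_split /= mulr_sumr -sumrB; apply: eq_bigr => j _.
    rewrite -big_split /= mulr_sumr mulr_sumr -sumrB; apply: eq_bigr => i _; ring.
  rewrite ec ea eb mulr_sumr [X in _ = X]mulr_sumr -big_split /= -sumrB; apply: eq_bigr => j _.
  ring.
have hadj : forall j i, adj G j i -> u j = u i.
  move=> j i hji.
  have h1 : \sum_i (adj G j i)%:R * (u j - u i) ^+ 2 = 0.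
    apply: (psumr_eq0P _ hq) => // j' _.
    by apply: sumr_ge0 => i' _; rewrite mulr_ge0 ?ler0n ?sqr_ge0.
  have h2 := @psumr_eq0P R _ predT (fun i' => (adj G j i')%:R * (u j - u i') ^+ 2)
     (fun i' _ => mulr_ge0 (ler0n _ _) (sqr_ge0 _)) h1 i isT.
  move: h2; rewrite hji mul1r => /eqP; rewrite sqrf_eq0 subr_eq0 => /eqP //.
move=> i i'; case/connectP: (conG i i') => p hp ->.
elim: p i hp => [|a p IH] i //= /andP [hia hp].
by rewrite (hadj _ _ hia); apply: IH.
Qed.

Lemma Solv_conn (i0 : 'I_n) : Solv R G.
Proof.
move=> b hb.
pose bm : 'rV[R]_n := \row_i b i.
have hsub : (bm <= L)%MS.
  rewrite submxE; apply/eqP/rowP => j; rewrite !mxE.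
  have hk : forall k, cokermx L k j = cokermx L i0 j.
    move=> k; apply: (@kernel_const (fun k => cokermx L k j)) => i.
    apply: etrans (_ : _ = (L *m cokermx L) i j) _; last by rewrite mulmx_coker mxE.
    by rewrite mxE; apply: eq_bigr => k' _; rewrite (@lapC R G symG) mulrC.
  under eq_bigr do rewrite mxE hk.
  by rewrite -mulr_suml hb mul0r.
suff [w hw] : exists w : 'rV[R]_n, w *m L = bm.
  exists (fun y => w 0 y) => x.
  have -> : b x = bm 0 x by rewrite mxE.
  by rewrite -hw mxE.
by exists (bm *m pinvmx L); exact: mulmxKpV.
Qed.

Lemma colsumL (l : 'I_n) : \sum_i L i l = 0.
Proof.
under eq_bigr do rewrite (@lapC R G symG) lapE.
rewrite sumrB (sum_pt l) => [|i hi]; last by rewrite eq_sym (negbTE hi) mul0r.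
by rewrite eqxx mul1r deg_sum subrr.
Qed.

Lemma Foster (i0 : 'I_n) : FF R G = 2 * (n%:R - 1).
Proof.
rewrite /FF /Om.
have hPL : L *m Xm R G *m L = L by exact: mulmxKpV.
move: (Xm R G) hPL => X hPL.
pose P := L *m X.
have hrow : forall i k, P i k - (i == k)%:R = P i i0 - (i == i0)%:R.
  move=> i k; apply: (@kernel_const (fun k => P i k - (i == k)%:R)) => j.
  under eq_bigr do rewrite mulrBl.
  rewrite sumrB [X in _ - X](sum_pt i) => [|k' hk]; last by rewrite eq_sym (negbTE hk) mul0r.
  rewrite eqxx mul1r.
  have e3 : \sum_k P i k * L k j = L i j.
    by have h := congr1 (fun M : 'M[R]_n => M i j) hPL; rewrite /= mxE in h.
  by rewrite e3 subrr.
have hcol : forall k, \sum_i P i k = 0.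
  move=> k; under eq_bigr do rewrite mxE.
  rewrite exchange_big big1 // => l _.
  by rewrite -mulr_suml colsumL mul0r.
have htr : \sum_i P i i = n%:R - 1.
  have e1 : forall i, P i i = (P i i0 - (i == i0)%:R) + 1.
    by move=> i; rewrite -(hrow i i) eqxx /=; ring.
  under eq_bigr do rewrite e1.
  rewrite big_split /= sumrB hcol sum1g sumr_const card_ord -mulr_natr; ring.
rewrite -htr.
have e2 : forall i, P i i = (deg i)%:R * X i i - \sum_l (adj G i l)%:R * X l i.
  move=> i; rewrite mxE.
  under eq_bigr do rewrite lapE mulrBl.
  rewrite sumrB (sum_pt i) => [|l hl]; last by rewrite eq_sym (negbTE hl) mul0r mul0r.
  by rewrite eqxx mul1r.
under [X in _ = 2 * X]eq_bigr do rewrite e2.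
have ea : \sum_i \sum_j (adj G i j)%:R * X j j = \sum_i (deg i)%:R * X i i.
  rewrite exchange_big; apply: eq_bigr => j _; rewrite deg_sum mulr_suml.
  by apply: eq_bigr => i _; rewrite symG.
have eb : \sum_i \sum_j (adj G i j)%:R * X i i = \sum_i (deg i)%:R * X i i.
  by apply: eq_bigr => i _; rewrite deg_sum mulr_suml.
have ec : \sum_i \sum_j (adj G i j)%:R * X i j = \sum_i \sum_l (adj G i l)%:R * X l i.
  rewrite exchange_big; apply: eq_bigr => j _; apply: eq_bigr => i _.
  by rewrite symG.
have ed : \sum_i \sum_j (adj G i j)%:R * (X i i + X j j - X i j - X j i) =
  \sum_i \sum_j (adj G i j)%:R * X i i + \sum_i \sum_j (adj G i j)%:R * X j j
  - \sum_i \sum_j (adj G i j)%:R * X i j - \sum_i \sum_l (adj G i l)%:R * X l i.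
  rewrite -big_split /= -!sumrB; apply: eq_bigr => i _ /=.
  rewrite -big_split /= -!sumrB; apply: eq_bigr => j _ /=; ring.
rewrite ed ea eb ec sumrB; ring.
Qed.

End Conn.

Lemma half_sum (R : realFieldType) (n : nat) (f : 'I_n -> 'I_n -> R) :
  (forall i j, f i j = f j i) -> (forall i, f i i = 0) ->
  \sum_(i < n) \sum_(j < n | (i < j)%N) f i j = (\sum_i \sum_j f i j) / 2.
Proof.
move=> fC f0.
have e1 : \sum_i \sum_j f i j = \sum_(i < n) \sum_(j < n | (i < j)%N) f i j + \sum_(i < n) \sum_(j < n | (j < i)%N) f i j.
  rewrite -big_split; apply: eq_bigr => i _ /=.
  rewrite [X in _ = X + _]big_mkcond [X in _ = _ + X]big_mkcond -big_split /=.
  apply: eq_bigr => j _ /=.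
  case: (ltngtP i j) => hij /=; rewrite ?addr0 ?add0r //.
  by have -> : i = j by apply: val_inj.
have e2 : \sum_(i < n) \sum_(j < n | (j < i)%N) f i j = \sum_(i < n) \sum_(j < n | (i < j)%N) f i j.
  rewrite (exchange_big_dep predT) //=; apply: eq_bigr => i _; apply: eq_bigr => j _.
  exact: fC.
rewrite e1 e2; by field.
Qed.

Section Fin.
Variable R : realFieldType.

Lemma kirchhoffE (H : graph) : kirchhoff R H = AA R H / 2.
Proof.
rewrite /kirchhoff.
under eq_bigr do under eq_bigr do rewrite resistanceE.
by rewrite half_sum // => [i j|i]; rewrite ?Om0 // OmC.
Qed.

Lemma add_degE (H : graph) : add_deg_kirchhoff R H = BB R H.
Proof.
rewrite /add_deg_kirchhoff.
under eq_bigr do under eq_bigr do rewrite resistanceE.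
rewrite half_sum => [|i j|i]; last by rewrite Om0 mulr0.
  2: by rewrite OmC addnC.
under eq_bigr do under eq_bigr do rewrite natrD mulrDl.
under eq_bigr do rewrite big_split /=.
rewrite big_split /=.
have -> : \sum_(i < nv H) \sum_(j < nv H) (deg j)%:R * Om R i j = BB R H.
  rewrite /BB exchange_big; apply: eq_bigr => j _; apply: eq_bigr => i _.
  by rewrite OmC.
rewrite -/(BB R H).
by field.
Qed.

Lemma mul_degE (H : graph) : mul_deg_kirchhoff R H = CC R H / 2.
Proof.
rewrite /mul_deg_kirchhoff.
under eq_bigr do under eq_bigr do rewrite resistanceE.
rewrite half_sum => [|i j|i]; last by rewrite Om0 mulr0.
  2: by rewrite OmC mulnC.
rewrite /CC; congr (_ / _); apply: eq_bigr => i _; apply: eq_bigr => j _.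
by rewrite natrM.
Qed.

Section Ind.
Variable H : graph.
Hypothesis symH : symmetric (adj H).
Hypothesis irrH : irreflexive (adj H).
Hypothesis hs : Solv R H.
Local Notation n := (nv H)%:R.
Local Notation m := (#|edges H|)%:R.
Local Notation S := (subdiv H).
Local Notation NN := (CC R H / 2 - m * FF R H / 2 + m ^+ 2 - m).

Lemma ONg1 : ONg (fun _ : 'I_(nv H) => (1 : R)) = BB R H - n * (FF R H / 4) + n * (m / 2).
Proof. by rewrite /ONg sumr_const card_ord -sumDd; under eq_bigr do rewrite mul1r; rewrite -mulr_natl mulr1. Qed.

Lemma ONgd : ONg (dg R (H:=H)) = CC R H - 2 * m * (FF R H / 4) + 2 * m * (m / 2).
Proof. by rewrite /ONg sumdDd (handshake R symH irrH). Qed.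

Lemma AA_sub : AA R S = 2 * AA R H + 2 * (BB R H - n * (FF R H / 4) + n * (m / 2)) + NN.
Proof.
have := @blocks R H symH irrH hs (fun _ => 1) (fun _ => 1) (fun _ => 1) (fun _ => 1) 1 1
  (fun _ => erefl) (fun _ => erefl) (fun _ => erefl) (fun _ => erefl).
rewrite ONg1.
have -> : \sum_(p : 'I_(nv S)) \sum_(q : 'I_(nv S)) (1 : R) * 1 * Om R p q = AA R S.
  by apply: eq_bigr => p _; apply: eq_bigr => q _; rewrite !mul1r.
have -> : \sum_(x : 'I_(nv H)) \sum_(y : 'I_(nv H)) (1 : R) * 1 * Om R x y = AA R H.
  by apply: eq_bigr => p _; apply: eq_bigr => q _; rewrite !mul1r.
move=> ->; ring.
Qed.

Lemma BB_sub : BB R S = 2 * BB R H + (CC R H - 2 * m * (FF R H / 4) + 2 * m * (m / 2))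
   + 2 * (BB R H - n * (FF R H / 4) + n * (m / 2)) + 2 * NN.
Proof.
have := @blocks R H symH irrH hs (dg R (H:=S)) (fun _ => 1) (dg R (H:=H)) (fun _ => 1) 2 1
  (degSL R symH irrH) (@degSR R H) (fun _ => erefl) (fun _ => erefl).
rewrite ONg1 ONgd.
have -> : \sum_(p : 'I_(nv S)) \sum_(q : 'I_(nv S)) dg R p * 1 * Om R p q = BB R S.
  by apply: eq_bigr => p _; apply: eq_bigr => q _; rewrite !mulr1.
have -> : \sum_(x : 'I_(nv H)) \sum_(y : 'I_(nv H)) dg R x * 1 * Om R x y = BB R H.
  by apply: eq_bigr => p _; apply: eq_bigr => q _; rewrite !mulr1.
move=> ->; ring.
Qed.

Lemma CC_sub : CC R S = 2 * CC R H + 4 * (CC R H - 2 * m * (FF R H / 4) + 2 * m * (m / 2))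
   + 4 * NN.
Proof.
have := @blocks R H symH irrH hs (dg R (H:=S)) (dg R (H:=S)) (dg R (H:=H)) (dg R (H:=H)) 2 2
  (degSL R symH irrH) (@degSR R H) (degSL R symH irrH) (@degSR R H).
rewrite ONgd /CC => ->; ring.
Qed.

End Ind.

Definition clo (k : nat) (A B C n m : R) : R :=
  2 ^+ k * (A / 2) + (4 ^+ k - 2 ^+ k) / 2 * B + (8 ^+ k - 2 * 4 ^+ k + 2 ^+ k) / 4 * (C / 2)
  + (8 ^+ k - 2 ^+ k) / 12 * (m * (2 * m - 2 * n + 1)) - (4 ^+ k - 1) / 6 * ((m - n) * (m - n + 1)).

Lemma main_ind k : forall H, symmetric (adj H) -> irreflexive (adj H) -> Solv R H ->
  FF R H = 2 * ((nv H)%:R - 1) ->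
  AA R (iter k subdiv H) / 2 = clo k (AA R H) (BB R H) (CC R H) (nv H)%:R (#|edges H|)%:R.
Proof.
elim: k => [|k IH] H sH iH hs hF.
  by rewrite /clo /= !expr0; field.
have hF' : FF R (subdiv H) = 2 * ((nv (subdiv H))%:R - 1).
  rewrite (FF_sub sH iH hs) hF /= natrD; ring.
rewrite iterSr (IH (subdiv H) (@symS H) (@irrS H) (Solv_sub sH iH hs) hF').
rewrite (AA_sub sH iH hs) (BB_sub sH iH hs) (CC_sub sH iH hs) (neS R sH iH).
have -> : ((nv (subdiv H))%:R : R) = (nv H)%:R + (#|edges H|)%:R by rewrite /= natrD.
rewrite hF /clo !exprS.
set x := 2 ^+ k; set y := 4 ^+ k; set z := 8 ^+ k.
by field.
Qed.

End Fin.

Unset Implicit Arguments.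

Theorem theorem3p4 (R : realFieldType) (G : graph) (k : nat) :
  (2 <= nv G)%N -> simple G -> connected G ->
  let n : R := (nv G)%:R in
  let m : R := (ne G)%:R in
  kirchhoff R (subdiv_iter k G) =
    2 ^+ k * kirchhoff R G
    + (4 ^+ k - 2 ^+ k) / 2 * add_deg_kirchhoff R G
    + (8 ^+ k - 2 * 4 ^+ k + 2 ^+ k) / 4 * mul_deg_kirchhoff R G
    + (8 ^+ k - 2 ^+ k) / 12 * (m * (2 * m - 2 * n + 1))
    - (4 ^+ k - 1) / 6 * ((m - n) * (m - n + 1)).
Proof.
move=> n2 [sG iG] cG n m.
have n0 : (0 < nv G)%N by apply: leq_trans n2.
pose i0 : 'I_(nv G) := Ordinal n0.
rewrite kirchhoffE /subdiv_iter (@main_ind R k G sG iG (Solv_conn sG cG i0) (Foster R sG cG i0)).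
rewrite kirchhoffE add_degE mul_degE /clo /n /m /ne.
ring.
Qed.
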